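(* Let $k$ be a field of characteristic $p>0$ and $A=k[x_1,\dots,x_r]/(x_1^p,\dots,x_r^p)$ with the Lie Hopf structure $\Delta_{\mathrm{Lie}}$. Then the homomorphism $\Phi_{\Delta_{\mathrm{Lie}}}\colon\operatorname{Ext}^*_A(k,k)\to\operatorname{Ext}^*_{A^e}(A,A)$ satisfies \[ \Phi_{\Delta_{\mathrm{Lie}}}(\eta_i)=\delta_i\quad\text{and}\quad\Phi_{\Delta_{\mathrm{Lie}}}(\zeta_i)=\chi_i\qquad(i=1,\dots,r). \]
   Context: The Lie Hopf structure (restricted enveloping algebra of the abelian restricted Lie algebra $k^r$ with trivial $p$-power map): $\Delta_{\mathrm{Lie}}(x_i)=x_i\otimes1+1\otimes x_i$, antipode $\sigma_{\mathrm{Lie}}(x_i)=-x_i$. $A^e=A\otimes_kA^{op}$; $\Phi_\Delta\colon\operatorname{Ext}^*_A(k,k)\to\operatorname{Ext}^*_{A^e}(A,A)$ is induced by the functor $X\mapsto X\otimes_kA$ from $A$-modules to $A^e$-modules with action $(\alpha\otimes\beta)(x\otimes a)=\sum_{(\alpha)}\alpha_1x\otimes\alpha_2a\beta$ (exact, preserves projectives, sends $k$ to $A$; $\Phi_\Delta$ applies it to a projective resolution of $k$ and to cocycles). Resolutions and classes: for $A_i=k[x_i]/(x_i^p)$, let $P^{(i)}_*$ be $\cdots\to A_i\xrightarrow{x_i}A_i\xrightarrow{x_i^{p-1}}A_i\xrightarrow{x_i}A_i\to0$ augmented to $k$; $P_*=P^{(1)}_*\otimes_k\cdots\otimes_kP^{(r)}_*$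 resolves $k$ over $A$, with summands $P_{j_1,\dots,j_r}\cong A$. $\hat\eta_i$ (resp. $\hat\zeta_i$) is the cochain $P_*\to k$ equal to the augmentation on $P_{j_1,\dots,j_r}$ with $j_i=1$ (resp. $2$), $j_\ell=0$ for $\ell\ne i$, zero elsewhere; $\eta_i,\zeta_i$ are their classes in $\operatorname{Ext}^*_A(k,k)$. With $A_i^e=k[y_i,z_i]/(y_i^p,z_i^p)$, $y_i=x_i\otimes1$, $z_i=1\otimes x_i$, $Q^{(i)}_*$ is $\cdots\to A_i^e\xrightarrow{y_i-z_i}A_i^e\xrightarrow{(y_i-z_i)^{p-1}}A_i^e\xrightarrow{y_i-z_i}A_i^e\to0$ augmented by multiplication to $A_i$; $Q_*=\bigotimes_i Q^{(i)}_*$ resolves $A$ over $A^e$ with summands $Q_{j_1,\dots,j_r}\cong A^e$. $\hat\delta_i$ (resp. $\hat\chi_i$) is the cochain $Q_*\to A$ equal to multiplication $A^e\to A$ on $Q_{j_1,\dots,j_r}$ with $j_i=1$ (resp. $2$), $j_\ell=0$ for $\ell\ne i$, zero elsewhere; $\delta_i,\chi_i$ are their classes in $\operatorname{Ext}^*_{A^e}(A,A)$. *)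

(* Defs.v *)
From HB Require Import structures.
From mathcomp Require Import all_boot all_order all_algebra.
Set Implicit Arguments. Unset Strict Implicit. Unset Printing Implicit Defensive.
Import GRing.Theory.
Local Open Scope ring_scope.

Notation mono p r := {ffun 'I_r -> 'I_p}.
(* an element sum_m f(m) x^m of A *)
Notation Aelt k p r := {ffun mono p r -> GRing.Field.sort k}.
(* an element sum_{a,b} c(a,b) x^a (x) x^b of A (x)_k A  (used both for
   A^e = A (x) A^op (= A (x) A since A is commutative) and for P_j (x) A) *)
Notation AAelt k p r := {ffun (mono p r * mono p r)%type -> GRing.Field.sort k}.

Definition idx (r : nat) := 'I_r -> nat.
Definition deg (r : nat) (j : idx r) : nat := (\sum_(l < r) j l)%N.
Definition ei (r : nat) (i : 'I_r) (n : nat) : idx r :=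
  fun l => if l == i then n else 0%N.
Definition decr (r : nat) (j : idx r) (i : 'I_r) : idx r :=
  fun l => if l == i then (j l).-1 else j l.
Definition incr (r : nat) (j : idx r) (i : 'I_r) : idx r :=
  fun l => if l == i then (j l).+1 else j l.
Definition idx_eqb (r : nat) (j j' : idx r) : bool := [forall l, j l == j' l].
Definition idx_zero (r : nat) : idx r := fun _ => 0%N.
Arguments idx_zero : clear implicits.

Section Alg.
Variables (k : fieldType) (p r : nat).
Local Notation A := (Aelt k p r).
Local Notation AA := (AAelt k p r).
Local Notation mono := {ffun 'I_r -> 'I_p}.

Definition fsc (T : finType) (c : k) (f : {ffun T -> k}) : {ffun T -> k} :=
  [ffun t => c * f t].

(* x^e for an arbitrary exponent vector e (zero if some e_l >= p, as x_l^p = 0) *)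
Definition xpow (e : idx r) : A :=
  [ffun m : mono => if [forall l, (m l : nat) == e l] then 1 else 0].
Definition monoA (m : mono) : A := [ffun m' => (m' == m)%:R].
Definition oneA : A := xpow (idx_zero r).
Definition xvar (i : 'I_r) (n : nat) : A := xpow (ei i n).

Definition addm (a b m : mono) : bool := [forall l, (a l : nat) + b l == m l].
Definition mulA (f g : A) : A :=
  [ffun m => \sum_(a : mono) \sum_(b : mono | addm a b m) f a * g b].
Definition epsA (f : A) : k := \sum_(m : mono | [forall l, (m l : nat) == 0%N]) f m.

Definition tens (f g : A) : AA := [ffun ab => f ab.1 * g ab.2].
Definition oneAA : AA := tens oneA oneA.
Definition mulAA (c d : AA) : AA :=
  [ffun m => \sum_(a : mono * mono) \sum_(b : mono * mono |
        addm a.1 b.1 m.1 && addm a.2 b.2 m.2) c a * d b].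
Definition powAA (c : AA) (n : nat) : AA := iter n (mulAA c) oneAA.

(* y_i - z_i = x_i (x) 1 - 1 (x) x_i in A^e *)
Definition yz (i : 'I_r) : AA := tens (xvar i 1) oneA - tens oneA (xvar i 1).

(* Lie coproduct on monomials: Delta(x^m) = prod_l (x_l (x) 1 + 1 (x) x_l)^{m_l},
   i.e. the algebra map determined by Delta(x_i) = x_i (x) 1 + 1 (x) x_i *)
Definition DeltaM (m : mono) : AA :=
  \big[mulAA/oneAA]_(l < r) powAA (tens (xvar l 1) oneA + tens oneA (xvar l 1)) (m l).

Definition actA (c : AA) (a : A) : A :=
  \sum_(ab : mono * mono) fsc (c ab) (mulA (mulA (monoA ab.1) a) (monoA ab.2)).
(* action of A^e on X (x) A (for X = P_j = A):
   (alpha (x) beta)(x (x) a) = sum alpha_1 x (x) alpha_2 a beta *)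
Definition actXA (c : AA) (v : AA) : AA :=
  \sum_(ab : mono * mono) fsc (c ab) (mulAA (mulAA (DeltaM ab.1) v) (tens oneA (monoA ab.2))).
(* eps (x) id : P_0 (x) A = A (x) A -> k (x) A = A *)
Definition epsAA1 (c : AA) : A :=
  [ffun m => \sum_(a : mono | [forall l, (a l : nat) == 0%N]) c (a, m)].

(* exponent of the i-th differential out of homological degree n >= 1:
   x_i if n odd, x_i^{p-1} if n even *)
Definition dexp (n : nat) : nat := if odd n then 1%N else p.-1.
(* Koszul sign for the tensor product of complexes *)
Definition ksgn (j : idx r) (i : 'I_r) : k :=
  (-1) ^+ (\sum_(l < r | (l < i)%N) j l)%N.

(* Elements of P_* (x) A: v j = component in P_j (x) A = A (x) A.
   Differential d (x) id, with d(e_j) = sum_i ksgn j i * x_i^{dexp j_i} e_{j - e_i}. *)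
Definition dPA (v : idx r -> AA) : idx r -> AA :=
  fun j => \sum_(i < r) fsc (ksgn (incr j i) i)
      (mulAA (tens (xvar i (dexp (incr j i i))) oneA) (v (incr j i))).

(* A^e-linear maps F : Q_* -> P_* (x) A, given by the images F j of the
   generators e_j of the summands Q_j = A^e; a comparison map is a chain map
   of degree 0 lifting id_A (Q_* -> A multiplication, P_*(x)A -> k(x)A = A). *)
Definition comparison (F : idx r -> idx r -> AA) : Prop :=
  [/\ (forall j j', deg j' <> deg j -> F j j' = 0),
      epsAA1 (F (idx_zero r) (idx_zero r)) = oneA
    & forall j, (0 < deg j)%N -> forall j',
        dPA (F j) j' =
        \sum_(i < r | (0 < j i)%N)
            fsc (ksgn j i) (actXA (powAA (yz i) (dexp (j i))) (F (decr j i) j'))].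

(* A^e-linear cochains Q_n -> A are given by their values g j on generators e_j
   (|j| = n).  Coboundary of g: (dg)(e_j) = g(d e_j). *)
Definition dQ (g : idx r -> A) : idx r -> A :=
  fun j => \sum_(i < r | (0 < j i)%N)
      fsc (ksgn j i) (actA (powAA (yz i) (dexp (j i))) (g (decr j i))).
Definition cohomologous (n : nat) (c1 c2 : idx r -> A) : Prop :=
  exists g : idx r -> A, forall j, deg j = n -> c1 j = c2 j + dQ g j.

(* The cochains hat-delta_i (n = 1), hat-chi_i (n = 2) on Q_*:
   multiplication A^e -> A on Q_{n e_i}, zero elsewhere. *)
Definition hatQ (i : 'I_r) (n : nat) : idx r -> A :=
  fun j => if idx_eqb j (ei i n) then oneA else 0.
(* The cochains hat-eta_i (n = 1), hat-zeta_i (n = 2) on P_*: augmentation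
   on P_{n e_i}, zero elsewhere; given by their values on generators. *)
Definition hatP (i : 'I_r) (n : nat) : idx r -> k :=
  fun j => if idx_eqb j (ei i n) then 1 else 0.

(* Phi_Delta on cochains: c : P_n -> k  |->  c (x) A : P_n (x) A -> k (x) A = A,
   (x (x) a) in P_j (x) A  |->  c_j eps(x) a. *)
Definition PhiCochain (n : nat) (c : idx r -> k) (v : idx r -> AA) : A :=
  \sum_(jj : {ffun 'I_r -> 'I_n.+1} | deg (fun l => (jj l : nat)) == n)
     fsc (c (fun l => (jj l : nat))) (epsAA1 (v (fun l => (jj l : nat)))).

(* The cocycle Phi(c) transported to the resolution Q_* along F. *)
Definition PhiPull (F : idx r -> idx r -> AA) (n : nat) (c : idx r -> k) : idx r -> A :=
  fun j => PhiCochain n c (F j).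

End Alg.

(* Main.v *)
Require Import Defs.
From HB Require Import structures.
From mathcomp Require Import all_boot all_order all_algebra.
From Stdlib Require Import FunctionalExtensionality.
Set Implicit Arguments. Unset Strict Implicit. Unset Printing Implicit Defensive.
Import GRing.Theory.
Local Open Scope ring_scope.

Section Infra.
Variables (k : fieldType) (p' r : nat).
Local Notation p := p'.+2.
Local Notation mono := {ffun 'I_r -> 'I_p}.
Local Notation A := (Aelt k p r).
Local Notation AA := (AAelt k p r).

Definition mk (e : idx r) : option mono :=
  if [forall l, e l < p]%N then Some [ffun l => inord (e l)] else None.
Definition sm (a b : mono) : option mono := mk (fun l => (a l + b l)%N).
Definition comb (o1 o2 : option mono) : option (mono * mono) :=
  match o1, o2 with Some c1, Some c2 => Some (c1, c2) | _, _ => None end.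
Definition s2 (x y : mono * mono) := comb (sm x.1 y.1) (sm x.2 y.2).

Lemma mkP (e : idx r) (m : mono) : (mk e == Some m) = [forall l, (m l : nat) == e l].
Proof.
rewrite /mk; case: ifP => [/forallP H|/negbT].
  apply/idP/idP.
    move/eqP=> [<-]; apply/forallP=> l; rewrite ffunE inordK //; exact: H.
  move/forallP=> H2; apply/eqP; congr Some; apply/ffunP=> l; apply/val_inj.
  by rewrite ffunE /= inordK ?H // (eqP (H2 l)).
rewrite negb_forall => /existsP [l Hl]; symmetry; apply/negbTE.
apply/negP=> /forallP /(_ l) /eqP E; move: Hl; by rewrite -E ltn_ord.
Qed.

Lemma mk_val (m : mono) : mk (fun l => m l) = Some m.
Proof. by apply/eqP; rewrite mkP; apply/forallP. Qed.

Lemma mk_Some (e : idx r) m : mk e = Some m -> e = (fun l => m l).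
Proof.
move=> H; apply: functional_extensionality => l.
by move/eqP: H; rewrite mkP => /forallP /(_ l) /eqP.
Qed.

Lemma mk_None (e : idx r) : mk e = None -> exists l, (p <= e l)%N.
Proof.
rewrite /mk; case: ifP => // /negbT; rewrite negb_forall => /existsP [l Hl] _.
by exists l; rewrite leqNgt.
Qed.

Lemma mk_None' (e f : idx r) : (forall l, e l <= f l)%N -> mk e = None -> mk f = None.
Proof.
move=> H /mk_None [l Hl]; rewrite /mk; case: ifP => // /forallP /(_ l).
by move: (leq_trans Hl (H l)); rewrite leqNgt => /negbTE ->.
Qed.

Lemma obind_sm_r (e : idx r) (d : mono) :
  obind (fun x => sm x d) (mk e) = mk (fun l => (e l + d l)%N).
Proof.
case E: (mk e) => [x|] /=.
  by rewrite /sm (mk_Some E).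
by symmetry; apply: (mk_None' _ E) => l; apply: leq_addr.
Qed.

Lemma obind_sm_l (e : idx r) (a : mono) :
  obind (fun x => sm a x) (mk e) = mk (fun l => (a l + e l)%N).
Proof.
case E: (mk e) => [x|] /=.
  by rewrite /sm (mk_Some E).
by symmetry; apply: (mk_None' _ E) => l; apply: leq_addl.
Qed.

Lemma smC a b : sm a b = sm b a.
Proof. by rewrite /sm; congr mk; apply: functional_extensionality => l; rewrite addnC. Qed.

Lemma smA a b c : obind (fun x => sm x c) (sm a b) = obind (sm a) (sm b c).
Proof.
rewrite /sm obind_sm_r obind_sm_l; congr mk.
by apply: functional_extensionality => l; rewrite addnA.
Qed.

Definition z0 : mono := [ffun => ord0].
Lemma sm0 b : sm z0 b = Some b.
Proof.
rewrite /sm -[RHS]mk_val; congr mk; apply: functional_extensionality => l.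
by rewrite ffunE.
Qed.

Lemma obind_comb (f g : mono -> option mono) o1 o2 :
  obind (fun x => comb (f x.1) (g x.2)) (comb o1 o2) = comb (obind f o1) (obind g o2).
Proof. by case: o1 => [a|]; case: o2 => [b|] //=; case: (f a). Qed.

Lemma s2C x y : s2 x y = s2 y x.
Proof. by rewrite /s2 smC [sm x.2 _]smC. Qed.

Lemma s2A x y z : obind (fun w => s2 w z) (s2 x y) = obind (s2 x) (s2 y z).
Proof.
rewrite /s2 (obind_comb (fun w => sm w z.1) (fun w => sm w z.2)).
rewrite (obind_comb (fun w => sm x.1 w) (fun w => sm x.2 w)).
by rewrite !smA.
Qed.

Lemma s20 y : s2 (z0, z0) y = Some y.
Proof. by rewrite /s2 /= !sm0; case: y. Qed.

Lemma addmE a b m : addm a b m = (sm a b == Some m).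
Proof.
rewrite /sm mkP; apply/forallP/forallP => H l; by rewrite eq_sym H.
Qed.

Definition ind (o : option (mono * mono)) (m : mono * mono) : k := (o == Some m)%:R.

Lemma mulAAE (c d : AA) : mulAA c d =
  [ffun m => \sum_a \sum_b ind (s2 a b) m * (c a * d b)].
Proof.
apply/ffunP=> m; rewrite !ffunE; apply: eq_bigr => a _.
rewrite big_mkcond; apply: eq_bigr => b _.
rewrite /ind !addmE /s2 /comb.
case: (sm a.1 b.1) => [c1|]; case: (sm a.2 b.2) => [c2|] /=; rewrite ?mul0r;
  try by case: ifP => // /andP[/eqP ? /eqP ?].
case: m => m1 m2 /=.
rewrite !(inj_eq (@Some_inj _)) xpair_eqE.
by case: ifP; rewrite ?mul1r ?mul0r.
all: by [].
Qed.

Lemma sum_ind o (G : mono * mono -> k) : \sum_x ind o x * G x = oapp G 0 o.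
Proof.
case: o => [x0|] /=.
  rewrite (bigD1 x0) //= /ind eqxx mul1r big1 ?addr0 // => x /negbTE.
  by rewrite (inj_eq (@Some_inj _)) eq_sym => ->; rewrite mul0r.
by rewrite big1 // => x _; rewrite /ind /= mul0r.
Qed.

Lemma mulAA_C (c d : AA) : mulAA c d = mulAA d c.
Proof.
rewrite !mulAAE; apply/ffunP=> m; rewrite !ffunE exchange_big /=.
by apply: eq_bigr => a _; apply: eq_bigr => b _; rewrite s2C [c _ * _]mulrC.
Qed.

Lemma oneAAE : oneAA k p r = [ffun a => (a == (z0, z0))%:R].
Proof.
apply/ffunP=> [[a1 a2]]; rewrite /oneAA /tens /oneA /xpow /= !ffunE /=.
have E (a : mono) : [forall l, (a l : nat) == idx_zero r l] = (a == z0).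
  apply/forallP/eqP => [H|->]; last by move=> l; rewrite ffunE.
  by apply/ffunP=> l; apply/val_inj; rewrite ffunE /=; apply/eqP/H.
rewrite !E xpair_eqE.
by case: (a1 == z0); case: (a2 == z0); rewrite /= ?mulr1 ?mulr0 ?mul0r.
Qed.

Lemma mulAA_1l (d : AA) : mulAA (oneAA k p r) d = d.
Proof.
rewrite mulAAE oneAAE; apply/ffunP=> m; rewrite ffunE.
rewrite (bigD1 (z0, z0)) //= [X in _ + X]big1 ?addr0.
  rewrite ffunE eqxx.
  under eq_bigr do rewrite mul1r s20.
  by rewrite /ind; rewrite (bigD1 m) //= eqxx mul1r big1 ?addr0 // => x /negbTE;
    rewrite (inj_eq (@Some_inj _)) => ->; rewrite mul0r.
move=> a /negbTE Ha; rewrite big1 // => b _; by rewrite ffunE Ha !mul0r mulr0.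
Qed.

Lemma mulAA_Dl (c c' d : AA) : mulAA (c + c') d = mulAA c d + mulAA c' d.
Proof.
rewrite !mulAAE; apply/ffunP=> m; rewrite !ffunE -big_split; apply: eq_bigr => a _.
rewrite -big_split; apply: eq_bigr => b _; by rewrite ffunE mulrDl mulrDr.
Qed.

Lemma mulAA_A (c d e : AA) : mulAA (mulAA c d) e = mulAA c (mulAA d e).
Proof.
rewrite !mulAAE; apply/ffunP=> m; rewrite !ffunE.
transitivity (\sum_a \sum_b \sum_y \sum_x ind (s2 a b) x * (ind (s2 x y) m * (c a * d b * e y))).
  transitivity (\sum_x \sum_y \sum_a \sum_b ind (s2 a b) x * (ind (s2 x y) m * (c a * d b * e y))).
    apply: eq_bigr => x _; apply: eq_bigr => y _; rewrite ffunE mulr_suml mulr_sumr.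
    apply: eq_bigr => a _; rewrite mulr_suml mulr_sumr; apply: eq_bigr => b _.
    by rewrite !mulrA [_ * ind _ _]mulrC.
  under eq_bigr do rewrite exchange_big. rewrite exchange_big.
  apply: eq_bigr => a _. under eq_bigr do rewrite exchange_big. rewrite exchange_big.
  apply: eq_bigr => b _. by rewrite exchange_big.
transitivity (\sum_a \sum_b \sum_y ind (obind (s2^~ y) (s2 a b)) m * (c a * d b * e y)).
  apply: eq_bigr => a _; apply: eq_bigr => b _; apply: eq_bigr => y _.
  rewrite (sum_ind _ (fun x => ind (s2 x y) m * (c a * d b * e y))).
  by case: (s2 a b) => [x|] /=; rewrite ?mul0r.
symmetry.
transitivity (\sum_a \sum_b \sum_y \sum_x ind (s2 b y) x * (ind (s2 a x) m * (c a * d b * e y))).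
  apply: eq_bigr => a _.
  transitivity (\sum_x \sum_b \sum_y ind (s2 b y) x * (ind (s2 a x) m * (c a * d b * e y))).
    apply: eq_bigr => x _; rewrite ffunE mulr_sumr mulr_sumr.
    apply: eq_bigr => b _; rewrite mulr_sumr mulr_sumr; apply: eq_bigr => y _.
    by rewrite !mulrA [_ * ind (s2 b y) _]mulrC -!mulrA.
  rewrite exchange_big; apply: eq_bigr => b _; rewrite exchange_big //.
apply: eq_bigr => a _; apply: eq_bigr => b _; apply: eq_bigr => y _.
rewrite (sum_ind _ (fun x => ind (s2 a x) m * (c a * d b * e y))) s2A.
by case: (s2 b y) => [x|] /=; rewrite ?mul0r.
Qed.

Lemma oneAA_neq0 : oneAA k p r != 0.
Proof.
apply/eqP=> /ffunP /(_ (z0, z0)); rewrite oneAAE !ffunE eqxx /=.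
by move/eqP; rewrite oner_eq0.
Qed.

Definition RA : Type := AAelt k p r.
HB.instance Definition _ := GRing.Zmodule.copy RA (AAelt k p r).
HB.instance Definition _ := @GRing.Zmodule_isComNzRing.Build RA (oneAA k p r) (@mulAA k p r)
  (fun x y z => esym (mulAA_A x y z)) mulAA_C mulAA_1l mulAA_Dl oneAA_neq0.

Lemma RA_mulE (x y : RA) : x * y = mulAA x y. Proof. by []. Qed.
Lemma RA_oneE : (1 : RA) = oneAA k p r. Proof. by []. Qed.
Lemma RA_addE (x y : RA) : x + y = (x + y : AA). Proof. by []. Qed.
Lemma powAAE (c : RA) n : powAA c n = c ^+ n.
Proof. by elim: n => [|n IH] //=; rewrite exprS IH. Qed.

Definition dd (x : mono * mono) : RA := [ffun y => (y == x)%:R].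
Definition PP (e f : idx r) : RA := tens (xpow k p e) (xpow k p f).

Lemma xpowE (e : idx r) : xpow k p e = match mk e with Some a => monoA k a | None => 0 end.
Proof.
apply/ffunP=> m; rewrite /xpow /monoA ffunE -mkP.
case: (mk e) => [a|]; rewrite ?ffunE //.
by rewrite (inj_eq (@Some_inj _)) eq_sym; case: (m == a).
Qed.

Lemma PPE e f : PP e f = match mk e, mk f with Some a, Some b => dd (a, b) | _, _ => 0 end.
Proof.
rewrite /PP !xpowE; case: (mk e) => [a|]; case: (mk f) => [b|];
  apply/ffunP => [[x y]]; rewrite !ffunE /= ?mulr0 ?mul0r //.
by rewrite xpair_eqE; case: (x == a); case: (y == b); rewrite ?mulr1 ?mulr0 ?mul0r.
Qed.

Lemma dd_mulE (x : mono * mono) (w : RA) m :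
  (dd x * w) m = \sum_b ind (s2 x b) m * w b.
Proof.
rewrite RA_mulE mulAAE ffunE (bigD1 x) //= [X in _ + X]big1 ?addr0.
  by apply: eq_bigr => b _; rewrite ffunE eqxx mul1r.
by move=> a /negbTE Ha; apply: big1 => b _; rewrite ffunE Ha mul0r mulr0.
Qed.

Lemma dd_mul x y : dd x * dd y = match s2 x y with Some z => dd z | None => 0 end.
Proof.
apply/ffunP=> m; rewrite dd_mulE (bigD1 y) //= [X in _ + X]big1 ?addr0.
  rewrite ffunE eqxx mulr1 /ind; case: (s2 x y) => [z|] //=; last by rewrite ffunE.
  by rewrite ffunE (inj_eq (@Some_inj _)) eq_sym.
by move=> b /negbTE Hb; rewrite ffunE Hb mulr0.
Qed.

Definition addi (e f : idx r) : idx r := fun l => (e l + f l)%N.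

Lemma PP_mul e f e' f' : PP e f * PP e' f' = PP (addi e e') (addi f f').
Proof.
rewrite !PPE.
case Ee: (mk e) => [a|]; last first.
  by rewrite mul0r (mk_None' (f := addi e e') _ Ee) // => l; apply: leq_addr.
case Ef: (mk f) => [b|]; last first.
  rewrite mul0r (mk_None' (f := addi f f') _ Ef); first by case: (mk _).
  by move=> l; apply: leq_addr.
case Ee': (mk e') => [a'|]; last first.
  by rewrite mulr0 (mk_None' (f := addi e e') _ Ee') // => l; apply: leq_addl.
case Ef': (mk f') => [b'|]; last first.
  rewrite mulr0 (mk_None' (f := addi f f') _ Ef'); first by case: (mk _).
  by move=> l; apply: leq_addl.
rewrite dd_mul /s2 /= /sm (mk_Some Ee) (mk_Some Ef) (mk_Some Ee') (mk_Some Ef').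
by case: (mk _) => [c1|]; case: (mk _) => [c2|].
Qed.

Definition Tm (b : mono) : RA := tens (oneA k p r) (monoA k b).
Definition phi (c : AA) : RA := \sum_(ab : mono * mono) fsc (c ab) ((DeltaM k ab.1 : RA) * Tm ab.2).

Lemma fscM (a : k) (x y : RA) : fsc a (x * y) = (fsc a x : RA) * y.
Proof.
apply/ffunP=> m; rewrite !RA_mulE !mulAAE !ffunE mulr_sumr; apply: eq_bigr => a' _.
rewrite mulr_sumr; apply: eq_bigr => b _; rewrite ffunE.
by rewrite mulrCA !mulrA.
Qed.

Lemma fsc_sum I (s : seq I) (P : pred I) (F : I -> RA) (a : k) :
  fsc a (\sum_(i <- s | P i) F i) = \sum_(i <- s | P i) fsc a (F i).
Proof.
apply/ffunP=> m; rewrite !ffunE !sum_ffunE mulr_sumr.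
by apply: eq_bigr => i _; rewrite ffunE.
Qed.

Lemma actXA_phi (c : AA) (v : RA) : actXA c v = phi c * v.
Proof.
rewrite /actXA /phi mulr_suml; apply: eq_bigr => ab _.
rewrite -fscM; congr fsc.
by rewrite -!RA_mulE -mulrA [v * _]mulrC mulrA.
Qed.

Lemma phiD (c c' : AA) : phi (c + c') = phi c + phi c'.
Proof.
rewrite /phi -big_split; apply: eq_bigr => ab _.
by apply/ffunP=> m; rewrite !ffunE mulrDl.
Qed.

Lemma phi0 : phi 0 = 0.
Proof.
by rewrite /phi big1 // => ab _; apply/ffunP=> m; rewrite !ffunE mul0r.
Qed.

Lemma phi_fsc (a : k) (c : AA) : phi (fsc a c) = fsc a (phi c).
Proof.
rewrite /phi fsc_sum; apply: eq_bigr => ab _.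
by apply/ffunP=> m; rewrite !ffunE mulrA.
Qed.

Lemma phiMn (c : AA) n : phi (c *+ n) = phi c *+ n.
Proof. by elim: n => [|n IH]; rewrite ?mulr0n ?phi0 // !mulrS phiD IH. Qed.

Lemma phi_sum I (s : seq I) (F : I -> AA) :
  phi (\sum_(i <- s) F i) = \sum_(i <- s) phi (F i).
Proof.
elim: s => [|x s IH]; first by rewrite !big_nil phi0.
by rewrite !big_cons phiD IH.
Qed.

Lemma phi_dd x : phi (dd x) = (DeltaM k x.1 : RA) * Tm x.2.
Proof.
rewrite /phi (bigD1 x) //= big1 ?addr0.
  by apply/ffunP=> m; rewrite !ffunE eqxx mul1r.
by move=> ab /negbTE H; apply/ffunP=> m; rewrite !ffunE H mul0r.
Qed.

Lemma sign_fsc j (w : RA) : (-1) ^+ j * w = fsc ((-1) ^+ j) w.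
Proof.
rewrite -signr_odd -[(-1 : k) ^+ j]signr_odd.
by case: (odd j); rewrite ?expr1 ?expr0 ?mulN1r ?mul1r; apply/ffunP=> m; rewrite !ffunE ?mulN1r ?mul1r.
Qed.

Definition Dl (l : 'I_r) : RA := PP (ei l 1) (idx_zero r) + PP (idx_zero r) (ei l 1).

Lemma DeltaME (m : mono) : (DeltaM k m : RA) = \prod_(l < r) Dl l ^+ (m l).
Proof.
rewrite /DeltaM; apply: (big_rec2 (fun (x : AA) (y : RA) => x = y)) => // l x y _ ->.
by rewrite powAAE.
Qed.

Lemma mk_ei (i : 'I_r) a : (a < p)%N -> {m : mono | mk (ei i a) = Some m}.
Proof.
move=> Ha; case E: (mk (ei i a)) => [m|]; first by exists m.
exfalso; case: (mk_None E) => l; rewrite /ei; case: (l == i) => //; by rewrite leqNgt Ha.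
Qed.

Lemma DeltaM_ei (i : 'I_r) a (m : mono) : mk (ei i a) = Some m -> (DeltaM k m : RA) = Dl i ^+ a.
Proof.
move=> /mk_Some E; rewrite DeltaME (bigD1 i) //= big1 ?mulr1.
  by have := congr1 (fun f => f i) E; rewrite /ei eqxx /= => <-.
move=> l Hl; have := congr1 (fun f => f l) E; rewrite /ei (negbTE Hl) /= => <-.
by rewrite expr0.
Qed.

Lemma Tm_ei (i : 'I_r) b (m : mono) : mk (ei i b) = Some m -> Tm m = PP (idx_zero r) (ei i b).
Proof.
by move=> E; rewrite /Tm /PP [xpow k p (ei i b)]xpowE E.
Qed.

Lemma PP_exp e f n : PP e f ^+ n = PP (fun l => (n * e l)%N) (fun l => (n * f l)%N).
Proof.
elim: n => [|n IH].
  rewrite expr0 RA_oneE; congr tens; congr xpow;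
    by apply: functional_extensionality => l; rewrite mul0n.
rewrite exprS IH PP_mul; congr PP;
  by apply: functional_extensionality => l; rewrite /addi mulSn.
Qed.

Lemma ei_mul (i : 'I_r) n a : (fun l => (n * ei i a l)%N) = ei i (n * a).
Proof. by apply: functional_extensionality => l; rewrite /ei; case: (l == i); rewrite ?muln0. Qed.

Lemma zero_mul n : (fun l => (n * idx_zero r l)%N) = idx_zero r.
Proof. by apply: functional_extensionality => l; rewrite /idx_zero muln0. Qed.

Lemma XZ_mul (i : 'I_r) a b :
  PP (ei i 1) (idx_zero r) ^+ a * PP (idx_zero r) (ei i 1) ^+ b = PP (ei i a) (ei i b).
Proof.
rewrite !PP_exp !ei_mul !zero_mul !muln1 PP_mul; congr PP;
  by apply: functional_extensionality => l; rewrite /addi /idx_zero ?addn0.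
Qed.

Lemma phi_main (i : 'I_r) n : (n < p)%N ->
  phi ((PP (ei i 1) (idx_zero r) - PP (idx_zero r) (ei i 1)) ^+ n) =
  PP (ei i 1) (idx_zero r) ^+ n.
Proof.
move=> Hn; set X := PP (ei i 1) (idx_zero r); set Z := PP (idx_zero r) (ei i 1).
have -> : X = (X + Z) - Z by rewrite addrK.
rewrite [in RHS]exprBn addrK exprBn phi_sum; apply: eq_bigr => j _.
rewrite phiMn; congr (_ *+ _).
rewrite -mulrA sign_fsc phi_fsc -mulrA sign_fsc; congr fsc.
rewrite XZ_mul.
have Ha : (n - j < p)%N by apply: leq_ltn_trans Hn; apply: leq_subr.
have Hb : (j < p)%N by apply: leq_ltn_trans Hn; rewrite -ltnS.
case: (mk_ei i Ha) => ma Ema; case: (mk_ei i Hb) => mb Emb.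
rewrite PPE Ema Emb phi_dd /= (DeltaM_ei Ema) (Tm_ei Emb).
have HZ : Z ^+ j = PP (idx_zero r) (ei i j) by rewrite PP_exp ei_mul zero_mul muln1.
by rewrite HZ.
Qed.

Lemma U1 (i : 'I_r) n (v : AA) : (n < p)%N ->
  actXA (powAA (yz k p i) n) v = mulAA (tens (xvar k p i n) (oneA k p r)) v.
Proof.
move=> Hn; rewrite (actXA_phi _ (v : RA)) (powAAE (yz k p i : RA)).
rewrite (phi_main i Hn) PP_exp ei_mul zero_mul muln1.
by [].
Qed.

Lemma sm_val a b c : sm a b = Some c -> forall l, (c l : nat) = (a l + b l)%N.
Proof. by move=> /mk_Some E l; have := congr1 (fun f => f l) E => <-. Qed.

Lemma sm_cancel a b b' c : sm a b = Some c -> sm a b' = Some c -> b = b'.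
Proof.
move=> H1 H2; apply/ffunP=> l; apply/val_inj/eqP.
by rewrite -(eqn_add2l (a l)) -(sm_val H1) -(sm_val H2).
Qed.

Lemma s2_cancel x y y' m : s2 x y = Some m -> s2 x y' = Some m -> y = y'.
Proof.
rewrite /s2; case E1: (sm x.1 y.1) => [c1|] //; case E2: (sm x.2 y.2) => [c2|] //= [<-].
case E1': (sm x.1 y'.1) => [d1|] //; case E2': (sm x.2 y'.2) => [d2|] //= [e1 e2].
subst d1 d2; case: y y' E1 E2 E1' E2' => y1 y2 [y1' y2'] /= E1 E2 E1' E2'.
by rewrite (sm_cancel E1 E1') (sm_cancel E2 E2').
Qed.

Lemma dd_coef x (w : RA) m y0 : s2 x y0 = Some m -> (dd x * w) m = w y0.
Proof.
move=> H; rewrite dd_mulE (bigD1 y0) //= /ind H eqxx mul1r big1 ?addr0 //.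
move=> y Hy; case E: (s2 x y == Some m); last by rewrite mul0r.
by move: Hy; rewrite (s2_cancel (eqP E) H) eqxx.
Qed.

Lemma dd_coef0 x (w : RA) m : (forall y, s2 x y <> Some m) -> (dd x * w) m = 0.
Proof.
move=> H; rewrite dd_mulE big1 // => y _; rewrite /ind.
by case: eqP => [/H //|_]; rewrite mul0r.
Qed.

Definition Esub (E : mono) (i : 'I_r) d : mono :=
  [ffun l => if l == i then inord (E i - d) else E l].

Lemma coefC (i : 'I_r) d (w : AA) (E : mono) b : (d < p)%N ->
  mulAA (tens (xvar k p i d) (oneA k p r)) w (E, b) =
  if (d <= E i)%N then w (Esub E i d, b) else 0.
Proof.
move=> Hd; case: (mk_ei i Hd) => ma Ema.
have Ez : mk (idx_zero r) = Some z0.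
  by rewrite -mk_val; congr mk; apply: functional_extensionality => l; rewrite ffunE.
have -> : mulAA (tens (xvar k p i d) (oneA k p r)) w = dd (ma, z0) * (w : RA).
  by rewrite RA_mulE; congr mulAA; rewrite -[tens _ _]/(PP (ei i d) (idx_zero r)) PPE Ema Ez.
have Hma := sm_val (sm0 ma); move: (mk_Some Ema) => Hma'.
case: ifP => HdE.
  apply: dd_coef; rewrite /s2 /= sm0.
  have -> : sm ma (Esub E i d) = Some E.
    rewrite /sm -mk_val; congr mk; apply: functional_extensionality => l.
    have := congr1 (fun f => f l) Hma'; rewrite /Esub ffunE /ei => <-.
    case: eqP => [->|_] //; rewrite inordK ?subnKC //.
    by apply: leq_ltn_trans (ltn_ord (E i)); apply: leq_subr.
  by [].
apply: dd_coef0 => y; rewrite /s2 /=.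
case E1: (sm ma y.1) => [c|] //; case: (sm z0 y.2) => [c'|] //= [Ec _].
move: (sm_val E1 i); rewrite Ec; have := congr1 (fun f => f i) Hma'; rewrite /ei eqxx => <-.
by move=> Ei; move: HdE; rewrite Ei leq_addr.
Qed.

Lemma idx_eqbP (j j' : idx r) : reflect (j = j') (idx_eqb j j').
Proof.
apply: (iffP forallP) => [H|->] //.
by apply: functional_extensionality => l; apply/eqP.
Qed.

Lemma deg_split (j : idx r) (i : 'I_r) : deg j = (j i + \sum_(l | l != i) j l)%N.
Proof. by rewrite /deg (bigD1 i). Qed.

Lemma le_deg (j : idx r) (i : 'I_r) : (j i <= deg j)%N.
Proof. by rewrite (deg_split j i) leq_addr. Qed.

Lemma le_deg_rest (j : idx r) (i l : 'I_r) : l != i -> (j l <= deg j - j i)%N.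
Proof.
move=> Hl; rewrite (deg_split j i) addKn (bigD1 l) //=; exact: leq_addr.
Qed.

Lemma deg_ei (i : 'I_r) n : deg (ei i n) = n.
Proof.
rewrite (deg_split _ i) big1 ?addn0 /ei ?eqxx // => l /negbTE ->. by [].
Qed.

Lemma ksgn1 (j : idx r) (i : 'I_r) : (forall l, l != i -> j l = 0%N) -> ksgn k j i = 1.
Proof.
move=> H; rewrite /ksgn big1 ?expr0 // => l Hl; apply: H.
by apply: contraTneq Hl => ->; rewrite ltnn.
Qed.

Lemma ksgn_ei (i : 'I_r) n : ksgn k (ei i n) i = 1.
Proof. by apply: ksgn1 => l /negbTE Hl; rewrite /ei Hl. Qed.

Lemma incr_decr (j : idx r) i : (0 < j i)%N -> incr (decr j i) i = j.
Proof.
move=> H; apply: functional_extensionality => l; rewrite /incr /decr.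
by case: eqP => [->|//]; rewrite prednK.
Qed.

Lemma decr_incr (j : idx r) i : decr (incr j i) i = j.
Proof.
apply: functional_extensionality => l; rewrite /incr /decr.
by case: eqP => [->|//].
Qed.

Lemma incr_ei (i : 'I_r) n : incr (ei i n) i = ei i n.+1.
Proof. by apply: functional_extensionality => l; rewrite /incr /ei; case: eqP. Qed.

Lemma incr_zero (i : 'I_r) : incr (idx_zero r) i = ei i 1.
Proof. by apply: functional_extensionality => l; rewrite /incr /ei; case: eqP. Qed.

Lemma deg1_inv (j : idx r) (i : 'I_r) : deg j = 1%N -> (0 < j i)%N ->
  j = ei i 1.
Proof.
move=> Hd Hi; have Hle := le_deg j i; rewrite Hd in Hle.
have Hji : j i = 1%N by apply/eqP; rewrite eqn_leq Hle Hi.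
apply: functional_extensionality => l; rewrite /ei; case: eqP => [->//|/eqP Hl].
by have := le_deg_rest j Hl; rewrite Hd Hji subnn leqn0 => /eqP.
Qed.

Lemma deg2_inv (j : idx r) (i : 'I_r) : deg j = 2%N -> j i = 2%N -> j = ei i 2.
Proof.
move=> Hd Hi; apply: functional_extensionality => l; rewrite /ei; case: eqP => [->//|/eqP Hl].
by have := le_deg_rest j Hl; rewrite Hd Hi subnn leqn0 => /eqP.
Qed.

Lemma deg_decr (j : idx r) i : (0 < j i)%N -> deg j = (deg (decr j i)).+1.
Proof.
move=> H; rewrite (deg_split j i) (deg_split (decr j i) i) /decr eqxx.
rewrite -addSn prednK //; congr addn; apply: eq_bigr => l /negbTE ->; by [].
Qed.

Lemma dexp_ge1 n : (0 < dexp p n)%N.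
Proof. by rewrite /dexp; case: (odd n). Qed.

Lemma dexp_lt n : (dexp p n < p)%N.
Proof. by rewrite /dexp; case: (odd n). Qed.

Lemma sumAA_E I (s : seq I) (P : pred I) (F : I -> AA) x :
  (\sum_(i <- s | P i) F i) x = \sum_(i <- s | P i) F i x.
Proof. by rewrite sum_ffunE. Qed.

Lemma epsAA1E (w : AA) b : epsAA1 w b = w (z0, b).
Proof.
rewrite /epsAA1 ffunE (big_pred1 z0) // => a /=.
apply/forallP/eqP => [H|->]; last by move=> l; rewrite ffunE.
by apply/ffunP=> l; apply/val_inj; rewrite ffunE; apply/eqP/H.
Qed.

Lemma PhiCochain_hat (i : 'I_r) n (v : idx r -> AA) :
  PhiCochain n (hatP k i n) v = epsAA1 (v (ei i n)).
Proof.
pose jj0 : {ffun 'I_r -> 'I_n.+1} := [ffun l => inord (ei i n l)].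
have Hjj0 : (fun l => (jj0 l : nat)) = ei i n.
  apply: functional_extensionality => l; rewrite ffunE inordK // ltnS /ei.
  by case: (l == i).
rewrite /PhiCochain (bigD1 jj0) /=; last by rewrite Hjj0 deg_ei.
rewrite big1 ?addr0.
  rewrite Hjj0 /hatP; case: idx_eqbP => // _.
  by apply/ffunP=> b; rewrite ffunE mul1r.
move=> jj /andP [_ Hne]; rewrite /hatP; case: idx_eqbP => [E|_].
  exfalso; move/negP: Hne; apply; apply/eqP/ffunP=> l; apply/val_inj.
  by move: (congr1 (fun f => f l) E) (congr1 (fun f => f l) Hjj0) => /= -> ->.
by apply/ffunP=> b; rewrite !ffunE mul0r.
Qed.

Lemma mulA0 (f : A) : Defs.mulA f 0 = 0.
Proof.
apply/ffunP=> m; rewrite !ffunE big1 // => a _; rewrite big1 // => b _.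
by rewrite ffunE mulr0.
Qed.

Lemma mulA0l (f : A) : Defs.mulA 0 f = 0.
Proof.
apply/ffunP=> m; rewrite !ffunE big1 // => a _; rewrite big1 // => b _.
by rewrite ffunE mul0r.
Qed.

Lemma dQ0 j : dQ (fun _ : idx r => (0 : A)) j = 0.
Proof.
rewrite /dQ big1 // => i _; rewrite /actA big1.
  by apply/ffunP=> m; rewrite !ffunE mulr0.
by move=> ab _; rewrite mulA0 mulA0l; apply/ffunP=> m; rewrite !ffunE mulr0.
Qed.

Lemma fsc0 (c : k) : fsc c (0 : AA) = 0.
Proof. by apply/ffunP=> m; rewrite !ffunE mulr0. Qed.

Lemma fsc1 (w : AA) : fsc 1 w = w.
Proof. by apply/ffunP=> m; rewrite !ffunE mul1r. Qed.

Lemma mulAA_1r (x : AA) : mulAA x (oneAA k p r) = x.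
Proof. by rewrite mulAA_C mulAA_1l. Qed.

Lemma mulAA0 (x : AA) : mulAA x 0 = 0.
Proof. by apply/ffunP=> m; rewrite mulAAE !ffunE big1 // => a _; rewrite big1 // => b _; rewrite ffunE !mulr0. Qed.

Lemma oneA_z0 : oneA k p r z0 = 1.
Proof.
rewrite /oneA /xpow ffunE.
by have -> : [forall l, (z0 l : nat) == idx_zero r l] by apply/forallP => l; rewrite ffunE.
Qed.

Definition F0 : idx r -> idx r -> AA := fun j j' => if idx_eqb j' j then oneAA k p r else 0.

Lemma comparison_F0 : comparison F0.
Proof.
split.
- by move=> j j' Hd; rewrite /F0; case: idx_eqbP => // E; subst.
- rewrite /F0; case: idx_eqbP => // _.
  by apply/ffunP=> b; rewrite epsAA1E /oneAA /tens ffunE /= oneA_z0 mul1r.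
move=> j _ j'; rewrite /dPA [RHS]big_mkcond /=; apply: eq_bigr => i _.
rewrite /F0; case: (idx_eqbP (incr j' i) j) => Hij.
  have Hpos : (0 < j i)%N by rewrite -Hij /incr eqxx.
  rewrite Hpos; subst j; rewrite decr_incr.
  have -> : idx_eqb j' j' by apply/idx_eqbP.
  rewrite U1 ?dexp_lt //.
rewrite mulAA0 fsc0; case: ifP => // Hpos; case: idx_eqbP => [E|_]; last by rewrite U1 ?dexp_lt // mulAA0 fsc0.
by exfalso; apply: Hij; rewrite E incr_decr.
Qed.

Lemma sum_only (G : 'I_r -> k) i : (forall m, m != i -> G m = 0) -> \sum_m G m = G i.
Proof. by move=> H; rewrite (bigD1 i) //= big1 ?addr0. Qed.

Lemma decr_ei (i : 'I_r) n : decr (ei i n.+1) i = ei i n.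
Proof. by apply: functional_extensionality => l; rewrite /decr /ei; case: eqP. Qed.

Definition Eone (i : 'I_r) : mono := [ffun l => if l == i then inord 1 else ord0].
Definition Emax (i : 'I_r) : mono := [ffun l => if l == i then ord_max else ord0].

Lemma Esub_one i : Esub (Eone i) i 1 = z0.
Proof.
apply/ffunP=> l; apply/val_inj; rewrite /Esub !ffunE eqxx.
by case: (l == i) => //=; rewrite inordK //= inordK.
Qed.

Lemma Esub_max i : Esub (Emax i) i p'.+1 = z0.
Proof.
apply/ffunP=> l; apply/val_inj; rewrite /Esub !ffunE eqxx.
by case: (l == i) => //=; rewrite subnn inordK.
Qed.

Lemma Eone_i i : (Eone i i : nat) = 1%N.
Proof. by rewrite ffunE eqxx inordK. Qed.
Lemma Emax_i i : (Emax i i : nat) = p'.+1.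
Proof. by rewrite ffunE eqxx. Qed.
Lemma Eone_l i l : l != i -> (Eone i l : nat) = 0%N.
Proof. by rewrite ffunE => /negbTE ->. Qed.
Lemma Emax_l i l : l != i -> (Emax i l : nat) = 0%N.
Proof. by rewrite ffunE => /negbTE ->. Qed.

Section Chain.
Variable F : idx r -> idx r -> AA.
Hypothesis HF : comparison F.

Lemma deg1_chain j (Hd : deg j = 1%N) (E : mono) b :
  \sum_(m < r) (if (1 <= E m)%N then F j (ei m 1) (Esub E m 1, b) else 0)
  = \sum_(l < r | (0 < j l)%N)
      (if (1 <= E l)%N then F (idx_zero r) (idx_zero r) (Esub E l 1, b) else 0).
Proof.
case: HF => _ _ H; have Hpos : (0 < deg j)%N by rewrite Hd.
have := H j Hpos (idx_zero r).
move=> Heq0; have := congr1 (fun w : AA => w (E, b)) Heq0; rewrite /dPA !sumAA_E => Heq.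
apply: (etrans (etrans _ Heq)).
  apply: eq_bigr => m _; rewrite ffunE incr_zero ksgn_ei mul1r coefC ?dexp_lt //.
  by rewrite /ei eqxx.
apply: eq_bigr => l Hl; rewrite ffunE (deg1_inv Hd Hl) ksgn_ei mul1r.
rewrite U1 ?dexp_lt // coefC ?dexp_lt // (decr_ei l 0).
have -> : dexp p (ei l 1 l) = 1%N by rewrite /ei eqxx.
have -> // : ei l 0 = idx_zero r.
by apply: functional_extensionality => l'; rewrite /ei /idx_zero; case: (l' == l).
Qed.

Lemma eps1 j (Hd : deg j = 1%N) i :
  epsAA1 (F j (ei i 1)) = if (0 < j i)%N then oneA k p r else 0.
Proof.
apply/ffunP=> b; rewrite epsAA1E; have := deg1_chain Hd (Eone i) b.
rewrite (sum_only (i := i)); last by move=> m Hm; rewrite Eone_l.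
rewrite Eone_i Esub_one /= => ->.
rewrite big_mkcond (sum_only (i := i)) /=; last first.
  by move=> m Hm; rewrite Eone_l //; case: ifP.
rewrite Eone_i Esub_one /=; case: ifP => _; last by rewrite ffunE.
by case: HF => _ H0 _; rewrite -epsAA1E H0.
Qed.

Lemma deg1_zero j (Hd : deg j = 1%N) i b : j i = 0%N ->
  F j (ei i 1) (Esub (Emax i) i 1, b) = 0.
Proof.
move=> Hji; have := deg1_chain Hd (Emax i) b.
rewrite (sum_only (i := i)); last by move=> m Hm; rewrite Emax_l.
rewrite Emax_i /= => ->.
rewrite big1 // => l Hl; rewrite Emax_l //.
by apply: contraTneq Hl => ->; rewrite Hji.
Qed.

Lemma eps2 j (Hd : deg j = 2%N) i :
  epsAA1 (F j (ei i 2)) = if j i == 2%N then oneA k p r else 0.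
Proof.
apply/ffunP=> b; rewrite epsAA1E.
case: HF => _ _ H; have Hpos : (0 < deg j)%N by rewrite Hd.
have := H j Hpos (ei i 1).
move=> Heq0; have := congr1 (fun w : AA => w (Emax i, b)) Heq0; rewrite /dPA !sumAA_E.
rewrite (sum_only (i := i)); last first.
  move=> m Hm; rewrite ffunE coefC ?dexp_lt // Emax_l //.
  by rewrite leqNgt dexp_ge1 mulr0.
rewrite ffunE incr_ei ksgn_ei mul1r coefC ?dexp_lt //.
have -> : dexp p (ei i 2 i) = p'.+1 by rewrite /ei eqxx.
rewrite Emax_i leqnn Esub_max => ->.
rewrite big_mkcond (sum_only (i := i)) /=; last first.
  move=> m Hm; case: ifP => // _; rewrite ffunE U1 ?dexp_lt // coefC ?dexp_lt //.
  by rewrite Emax_l // leqNgt dexp_ge1 mulr0.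
have Hle := le_deg j i; rewrite Hd in Hle.
case Hji: (j i) Hle => [|[|[|n]]] // _.
- by rewrite /= ffunE.
- rewrite (_ : (0 < 1)%N = true) // (_ : (1 == 2)%N = false) //.
  rewrite ffunE U1 ?dexp_lt // coefC ?dexp_lt //.
  have -> : dexp p 1 = 1%N by [].
  rewrite Emax_i.
  rewrite (deg1_zero (j := decr j i)) ?mulr0 ?ffunE //.
    by apply/eq_add_S; rewrite -deg_decr ?Hd ?Hji.
  by rewrite /decr eqxx Hji.
- have Ej := deg2_inv Hd Hji.
  rewrite (_ : (0 < 2)%N = true) // eqxx.
  rewrite ffunE U1 ?dexp_lt // coefC ?dexp_lt //.
  have -> : dexp p 2 = p'.+1 by [].
  rewrite Emax_i leqnn.
  rewrite Ej ksgn_ei mul1r decr_ei Esub_max.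
  by rewrite -epsAA1E eps1 ?deg_ei // /ei eqxx.
Qed.
End Chain.
End Infra.

Unset Implicit Arguments.

Theorem theorem4p2 (k : fieldType) (p r : nat) :
  prime p -> p \in [pchar k] ->
  (exists F : idx r -> idx r -> AAelt k p r, comparison F) /\
  (forall F : idx r -> idx r -> AAelt k p r, comparison F ->
     forall i : 'I_r,
       cohomologous 1 (PhiPull F 1 (hatP k i 1)) (hatQ k p i 1) /\
       cohomologous 2 (PhiPull F 2 (hatP k i 2)) (hatQ k p i 2)).
Proof.
move=> Hp _; case: p Hp => [|[|p']] // Hp.
split.
  by eexists; apply: comparison_F0.
move=> F HF i; split.
- exists (fun _ => 0) => j Hj; rewrite dQ0 addr0 /PhiPull PhiCochain_hat (eps1 HF Hj) /hatQ.
  case: idx_eqbP => [->|Hne]; first by rewrite /ei eqxx.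
  by case: ifP => // Hpos; exfalso; apply: Hne; apply: deg1_inv.
- exists (fun _ => 0) => j Hj; rewrite dQ0 addr0 /PhiPull PhiCochain_hat (eps2 HF Hj) /hatQ.
  case: idx_eqbP => [->|Hne]; first by rewrite /ei eqxx.
  by case: eqP => // H2; exfalso; apply: Hne; apply: deg2_inv.
Qed.
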